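(* Let $\Gamma$ be a Deza graph with parameters $(n,k,k-1,a)$, $k>1$, $\beta=1$. For an $NA$-vertex $x$, the vertex $(x')_b$ is not adjacent to $x$.
   Context: A Deza graph with parameters $(n,k,b,a)$, $a\le b$, is a $k$-regular graph on $n$ vertices in which any two distinct vertices have $a$ or $b$ common neighbours; $\beta$ is the number of vertices $u\ne v$ with exactly $b$ common neighbours with a given vertex $v$. Since $\beta=1$, for each vertex $x$ let $x_b$ denote the unique vertex having $b=k-1$ common neighbours with $x$. A vertex $x$ is an $A$-vertex if $x$ is adjacent to $x_b$, and an $NA$-vertex otherwise. For an $NA$-vertex $x$, $x'$ denotes the unique neighbour of $x$ not adjacent to $x_b$. *)

(* Defs.v *)
From mathcomp Require Import all_boot.
Set Implicit Arguments. Unset Strict Implicit. Unset Printing Implicit Defensive.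

Definition simple_graph (T : finType) (e : rel T) : Prop :=
  symmetric e /\ irreflexive e.

Definition nbhd (T : finType) (e : rel T) (x : T) : {set T} := [set y | e x y].
Definition ncommon (T : finType) (e : rel T) (x y : T) : nat :=
  #|[set z | e x z && e y z]|.

Definition deza_graph (T : finType) (e : rel T) (n k b a : nat) : Prop :=
  [/\ simple_graph e, #|T| = n, (forall x, #|nbhd e x| = k), a <= b &
      forall x y, x != y -> ncommon e x y = a \/ ncommon e x y = b].

Definition beta_at (T : finType) (e : rel T) (b : nat) (v : T) : nat :=
  #|[set u | (u != v) && (ncommon e v u == b)]|.

(* Main.v *)
Require Import Defs.
From mathcomp Require Import all_boot.
From mathcomp Require Import zify.
Set Implicit Arguments. Unset Strict Implicit. Unset Printing Implicit Defensive.

Lemma ncommonE (T : finType) (e : rel T) x u :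
  ncommon e x u = #|nbhd e u :&: nbhd e x|.
Proof. by rewrite /ncommon; apply: eq_card => t; rewrite !inE andbC. Qed.

Lemma card_add1 (T : finType) (N I : {set T}) p : p \notin I ->
  #|N :&: (p |: I)| = (p \in N) + #|N :&: I|.
Proof.
move=> pI; rewrite setIUr; case pN: (p \in N).
- have -> : N :&: [set p] = [set p] by apply/setP=> t; rewrite !inE; case: eqP => [->|]; rewrite ?pN ?andbF.
  by rewrite cardsU1 !inE (negbTE pI) andbF.
- have -> : N :&: [set p] = set0 by apply/setP=> t; rewrite !inE; case: eqP => [->|]; rewrite ?pN ?andbF.
  by rewrite set0U.
Qed.

Lemma uniq_of_card1 (T : finType) (S : {set T}) y z :
  #|S| = 1 -> y \in S -> z \in S -> y = z.
Proof.
move/eqP/cards1P=> [w ->]; rewrite !inE => /eqP -> /eqP -> //.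
Qed.

Theorem lemma10 (T : finType) (e : rel T) (n k a : nat) :
  deza_graph e n k k.-1 a -> 1 < k ->
  (forall v, beta_at e k.-1 v = 1) ->
  forall x xb x' y : T,
    xb != x -> ncommon e x xb = k.-1 -> ~~ e x xb ->
    e x x' -> ~~ e x' xb ->
    y != x' -> ncommon e x' y = k.-1 ->
    ~~ e x y.
Proof.
move=> [[sym irr] _ degk _ dz] k1 beta x xb x' y xbx cxb nxxb xx' nx'xb yx' cx'y.
have ncsym : forall u v, ncommon e u v = ncommon e v u.
  by move=> u v; rewrite /ncommon; apply: eq_card => t; rewrite !inE andbC.
have uniqb : forall v u1 u2, u1 != v -> u2 != v -> ncommon e v u1 = k.-1 ->
    ncommon e v u2 = k.-1 -> u1 = u2.
  move=> v u1 u2 h1 h2 c1 c2; have hb := beta v; rewrite /beta_at in hb.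
  by apply: (uniq_of_card1 hb); rewrite inE ?h1 ?h2 ?c1 ?c2 eqxx.
set Nx := nbhd e x; set Nb := nbhd e xb.
have cI : #|Nx :&: Nb| = k.-1 by rewrite -cxb ncommonE setIC.
have cxD : #|Nx :\: Nb| = 1.
  have := cardsID Nb Nx; rewrite cI degk => h.
  have := degk x; rewrite -/Nx => dx. lia.
have symE : forall u v, e u v = e v u := sym.
have inN : forall u v, (v \in nbhd e u) = e u v by move=> u v; rewrite /nbhd inE.
have x'D : x' \in Nx :\: Nb by rewrite inE !inN xx' (symE xb x') nx'xb.
have eD : Nx :\: Nb = [set x'].
  by move/eqP/cards1P: cxD => [w ew]; move: x'D; rewrite ew inE => /eqP <-.
have cbD : #|Nb :\: Nx| = 1.
  have := cardsID Nx Nb; rewrite setIC cI => h.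
  have := degk xb; rewrite -/Nb => dx. lia.
move/eqP/cards1P: cbD => [z ez].
have zD : z \in Nb :\: Nx by rewrite ez inE.
move: (zD); rewrite inE !inN => /andP [nxz bz].
set I := Nx :&: Nb.
have x'I : x' \notin I by rewrite inE !inN (symE xb x') (negbTE nx'xb) andbF.
have zI : z \notin I by rewrite inE !inN (negbTE nxz).
have NxE : Nx = x' |: I by rewrite /I -eD setUC setID.
have NbE : Nb = z |: I by rewrite /I setIC -ez setUC setID.
have cbx : ncommon e xb x = k.-1 by rewrite ncsym.
have key : forall u, u != x -> u != xb -> e u x' = e u z.
  move=> u ux uxb.
  have h1 : ncommon e x u = a.
    case: (dz x u); first by rewrite eq_sym.
      by [].
    move=> c; have := uniqb x u xb ux xbx c cxb; move: uxb => /eqP //.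
  have h2 : ncommon e xb u = a.
    have xxb : x != xb by rewrite eq_sym.
    case: (dz xb u); first by rewrite eq_sym.
      by [].
    move=> c; have := uniqb xb u x uxb xxb c cbx; move: ux => /eqP //.
  move: h1; rewrite -h2 !ncommonE -/Nx -/Nb NxE NbE !card_add1 // !inN.
  by move/addIn; case: (e u x'); case: (e u z).
have cx'z : ncommon e x' z = k.-1.
  have -> : ncommon e x' z = #|nbhd e x' :\ x|.
    apply: eq_card => t; rewrite !inE.
    idtac.
    have [->|tx] := eqVneq t x; first by rewrite /= (symE z x) (negbTE nxz) andbF.
    have [->|txb] := eqVneq t xb; first by rewrite (negbTE nx'xb).
    by rewrite /= (symE x' t) (symE z t) key // andbb.
  have := cardsD1 x (nbhd e x'); rewrite degk inN symE xx' => h. lia.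
have zx' : z != x'.
  by apply/eqP => zx; move: nxz; rewrite zx xx'.
have -> : y = z by apply: (uniqb x' y z yx' zx' cx'y cx'z).
exact: nxz.
Qed.
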